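(* Let $k$ be a field of characteristic zero and let $(A,M)$ be a finite dimensional Gorenstein local commutative $k$-algebra which is not a principal ideal algebra. Then every $k$-algebra homomorphism from $A$ into a principal ideal $k$-algebra maps the socle $\operatorname{soc}(A)=\{a\in A: aM=0\}$ to zero. In particular, there is no injective $k$-algebra homomorphism from $A$ into a principal ideal algebra.
   Context: All algebras are commutative, unital and finite dimensional over $k$. A principal ideal algebra is a finite dimensional commutative $k$-algebra in which every ideal is principal. A finite dimensional local algebra $(A,M)$ is called Gorenstein if $\dim_k\operatorname{soc}(A)=1$, where $\operatorname{soc}(A)$ is the annihilator of $M$. *)

(* Defs.v *)
From HB Require Import structures.
From mathcomp Require Import all_boot all_order all_algebra all_field.
Set Implicit Arguments. Unset Strict Implicit. Unset Printing Implicit Defensive.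
Import GRing.Theory.
Local Open Scope ring_scope.

(* Finite-dimensional unital K-algebras are [falgType K]; commutativity is an
   explicit hypothesis. Ideals are represented as predicates [A -> Prop]. *)
Section Defs.
Variable K : fieldType.
Variable A : falgType K.

Definition commutative_alg : Prop := forall x y : A, x * y = y * x.

Definition is_ideal (I : A -> Prop) : Prop :=
  [/\ I 0, (forall x y, I x -> I y -> I (x + y)) & (forall a x, I x -> I (a * x))].

Definition principal_ideal (I : A -> Prop) : Prop :=
  exists g : A, forall x, I x <-> exists a : A, x = a * g.

Definition principal_ideal_algebra : Prop :=
  forall I : A -> Prop, is_ideal I -> principal_ideal I.

Definition maximal_ideal (M : A -> Prop) : Prop :=
  [/\ is_ideal M, ~ M 1 &
      forall I : A -> Prop, is_ideal I -> (forall x, M x -> I x) -> ~ I 1 ->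
        forall x, I x -> M x].

Definition local_with (M : A -> Prop) : Prop :=
  maximal_ideal M /\
  forall M' : A -> Prop, maximal_ideal M' -> forall x, M' x <-> M x.

Definition socle (M : A -> Prop) (x : A) : Prop :=
  forall m, M m -> x * m = 0.

Definition gorenstein (M : A -> Prop) : Prop :=
  exists S : {vspace A}, (forall x, x \in S <-> socle M x) /\ \dim S = 1%N.

End Defs.

(* Main.v *)
Require Import Defs.
From HB Require Import structures.
From mathcomp Require Import all_boot all_order all_algebra all_field.
From mathcomp Require Import zify.
From Stdlib Require Import Classical.
Set Implicit Arguments. Unset Strict Implicit. Unset Printing Implicit Defensive.
Import GRing.Theory.
Local Open Scope ring_scope.

Section Ideals.
Variables (K : fieldType) (A : falgType K).

Lemma ideal0 (I : A -> Prop) : is_ideal I -> I 0.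
Proof. by case. Qed.
Lemma idealD (I : A -> Prop) x y : is_ideal I -> I x -> I y -> I (x + y).
Proof. by case=> _ H _; apply: H. Qed.
Lemma idealM (I : A -> Prop) a x : is_ideal I -> I x -> I (a * x).
Proof. by case=> _ _ H; apply: H. Qed.
Lemma idealZ (I : A -> Prop) k x : is_ideal I -> I x -> I (k *: x).
Proof. by move=> II Ix; rewrite -mulr_algl; apply: idealM. Qed.
Lemma idealN (I : A -> Prop) x : is_ideal I -> I x -> I (- x).
Proof. by move=> II Ix; rewrite -scaleN1r; apply: idealZ. Qed.

Variable M : A -> Prop.
Hypothesis Aloc : local_with M.

Lemma proper_sub_aux d : forall (J : A -> Prop) (U : {vspace A}),
  is_ideal J -> ~ J 1 -> (forall u, u \in U -> J u) ->
  (\dim {:A} - \dim U <= d)%N -> forall x, J x -> M x.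
Proof.
elim: d => [|d IH] J U IJ nJ1 UJ hd x Jx;
  (have [Jmax|nmax] := classic (maximal_ideal J); first exact/(Aloc.2 J Jmax x));
  (have [I [II JI nI1 [y [Iy nJy]]]] : exists I : A -> Prop,
     [/\ is_ideal I, (forall x, J x -> I x), ~ I 1 & exists y, I y /\ ~ J y]
    by apply: NNPP => H; apply: nmax; split=> // I II JI nI1 z Iz;
       apply: NNPP => nJz; apply: H; exists I; split=> //; exists z);
  (have yU : y \notin U by apply/negP => /UJ);
  set U' := (U + <[y]>)%VS;
  (have U'I : forall u, u \in U' -> I u by
     move=> u /memv_addP[u1 u1U [v /vlineP[k ->] ->]];
     apply: idealD => //; [exact/JI/UJ | exact: idealZ]);
  (have ltU : (\dim U < \dim U')%N by
     rewrite (ltn_leqif (dimv_leqif_eq (addvSl U <[y]>)));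
     apply/negP => /eqP eU; move: yU; rewrite eU => /negP; apply;
     rewrite /U'; apply/memv_addP; exists 0; [exact: mem0v | exists y;
       [exact: memv_line | by rewrite add0r]]);
  have := dimvS (subvf U'); rewrite dimvf => hU'.
- by rewrite dimvf in hd; lia.
- apply: (IH I U') => //; last exact: JI.
  by rewrite dimvf in hd *; lia.
Qed.

Lemma proper_sub (J : A -> Prop) : is_ideal J -> ~ J 1 -> forall x, J x -> M x.
Proof.
move=> IJ nJ1; apply: (@proper_sub_aux (\dim {:A}) J 0%VS) => //.
  by move=> u; rewrite memv0 => /eqP ->; apply: ideal0.
by rewrite dimv0 subn0.
Qed.
End Ideals.

Section Dual.
Variables (K : fieldType) (A : falgType K) (phi : 'Hom(A, K^o)).
Definition Dmap (h : A) : 'Hom(A, K^o) := (phi \o amull h)%VF.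
Lemma DmapE h c : Dmap h c = phi (h * c).
Proof. by rewrite /Dmap comp_lfunE lfunE. Qed.
Fact Dmap_linear : linear Dmap.
Proof.
move=> k x y; apply/lfunP => c.
by rewrite add_lfunE scale_lfunE !DmapE mulrDl -scalerAl linearP.
Qed.
HB.instance Definition _ := GRing.isSemilinear.Build K A 'Hom(A, K^o) _ Dmap
  (GRing.semilinear_linear Dmap_linear).
End Dual.

Lemma functional_sep (K : fieldType) (A : falgType K) (W : {vspace A}) z :
  z \notin W -> exists psi : 'Hom(A, K^o),
    (forall w, w \in W -> psi w = 0) /\ psi z != 0.
Proof.
move=> zW.
set v := z - projv W z.
have vnz : v != 0.
  apply/negP => /eqP v0; move/negP: zW; apply.
  have -> : z = projv W z by apply/eqP; rewrite -subr_eq0 -/v v0.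
  exact: memv_proj.
have [i ci] : exists i, coord (vbasis {:A}) i v != 0.
  apply: NNPP => H; move/eqP: vnz; apply.
  rewrite (coord_vbasis (memvf v)) big1 // => i _.
  have /eqP -> : coord (vbasis {:A}) i v == 0 by apply: NNPP => C; apply: H; exists i; exact/negP.
  by rewrite scale0r.
pose cf : A -> K^o := coord (vbasis {:A}) i.
exists (linfun cf \o (\1 - projv W))%VF; split.
  move=> w wW; rewrite comp_lfunE add_lfunE opp_lfunE id_lfunE projv_id //.
  by rewrite subrr lfunE /cf linear0.
by rewrite comp_lfunE add_lfunE opp_lfunE id_lfunE lfunE.
Qed.

Section Gor.
Variables (K : fieldType) (A : falgType K).
Hypothesis Acomm : commutative_alg A.
Variable M : A -> Prop.
Hypothesis Aloc : local_with M.
Variable s : A.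
Hypothesis s_nz : s != 0.
Hypothesis soc_s : forall x, socle M x <-> exists k, x = k *: s.

Lemma amulrE (u v : A) : amulr u v = v * u.
Proof. by rewrite lfunE. Qed.

Lemma Mideal : is_ideal M. Proof. by case: Aloc => [[]]. Qed.
Lemma nM1 : ~ M 1. Proof. by case: Aloc => [[]]. Qed.

Lemma G1 (y : A) : y != 0 -> exists a, a * y = s.
Proof.
have [n] := ubnP (\dim (limg (amulr y))).
elim: n y => // n IH y Hlt ynz.
have [soc|nsoc] := classic (socle M y).
  have [k yk] := (soc_s y).1 soc.
  have knz : k != 0 by apply: contraNneq ynz => k0; rewrite yk k0 scale0r.
  by exists (k^-1)%:A; rewrite mulr_algl yk scalerA mulVf // scale1r.
have [m [Mm ym]] : exists m, M m /\ y * m != 0.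
  apply: NNPP => H; apply: nsoc => m Mm; apply: NNPP => ym.
  by apply: H; exists m; split=> //; apply/eqP.
set y' := m * y.
have y'nz : y' != 0 by rewrite /y' Acomm.
have sub : (limg (amulr y') <= limg (amulr y))%VS.
  apply/subvP => v /memv_imgP[w _ ->].
  by rewrite amulrE /y' mulrA -amulrE; apply: memv_img; apply: memvf.
have [lt|ge] := ltnP (\dim (limg (amulr y'))) (\dim (limg (amulr y))).
  have [a' Ha'] := IH y' (leq_trans lt Hlt) y'nz.
  by exists (a' * m); rewrite -mulrA.
have eq : limg (amulr y') = limg (amulr y).
  by apply/eqP; rewrite eqEdim sub ge.
have : y \in limg (amulr y') by rewrite eq -[y in y \in _]mul1r -amulrE memv_img ?memvf.
case/memv_imgP=> b _; rewrite amulrE => yb.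
have I1 : is_ideal (fun z => z * y = 0).
  split; first by rewrite mul0r.
    by move=> a c ay cy; rewrite mulrDl ay cy addr0.
  by move=> a c cy; rewrite -mulrA cy mulr0.
have M1 : M (1 - b * m).
  apply: (proper_sub Aloc I1); first by rewrite mul1r; apply/eqP.
  by rewrite mulrBl mul1r {1}yb /y' mulrA subrr.
exfalso; apply: nM1; have -> : (1 : A) = (1 - b * m) + b * m by rewrite subrK.
by apply: idealD Mideal M1 _; apply: idealM Mideal Mm.
Qed.


Lemma nondeg (phi : 'Hom(A, K^o)) : phi s != 0 ->
  forall h, (forall c, phi (h * c) = 0) -> h = 0.
Proof.
move=> ps h H; apply: NNPP => /eqP hnz.
have [a ha] := G1 hnz.
by move/negP: ps; apply; rewrite -ha Acomm H.
Qed.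

Lemma DA (g z : A) : (forall h, h * g = 0 -> z * h = 0) -> exists a, z = a * g.
Proof.
move=> Hz; apply: NNPP => nz.
have zW : z \notin limg (amulr g).
  by apply/negP => /memv_imgP[u _ zu]; apply: nz; exists u; rewrite zu amulrE.
have [psi [psiW psiz]] := functional_sep zW.
have [phi [_ phis]] : exists phi : 'Hom(A, K^o),
    (forall w, w \in 0%VS -> phi w = 0) /\ phi s != 0.
  by apply: functional_sep; rewrite memv0.
pose D := linfun (Dmap phi).
have kD : lker D = 0%VS.
  apply/eqP; rewrite -subv0; apply/subvP => h; rewrite memv_ker memv0 => /eqP Dh.
  apply/eqP; apply: (nondeg phis) => c.
  by move: (congr1 (fun f : 'Hom(A, K^o) => f c) Dh); rewrite /= /D lfunE /= DmapE zero_lfunE.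
have iD : limg D = fullv.
  apply/eqP; rewrite eqEdim subvf /=.
  have := limg_ker_dim D fullv; rewrite kD capv0 dimv0 add0n => ->.
  have hd : dim 'Hom(A, K^o) = (dim A * 1)%N by [].
  by rewrite !dimvf hd muln1.
have : psi \in limg D by rewrite iD memvf.
case/memv_imgP=> h _; rewrite lfunE => psih.
have hg : h * g = 0.
  apply: NNPP => /eqP hgnz.
  have [a ha] := G1 hgnz.
  move/negP: phis; apply; apply/eqP.
  rewrite -ha.
  have -> : a * (h * g) = h * (a * g) by rewrite mulrA (Acomm a h) -mulrA.
  by rewrite -DmapE -psih psiW // -amulrE memv_img ?memvf.
move/negP: psiz; apply; apply/eqP.
by rewrite psih DmapE Acomm Hz // linear0.
Qed.

Lemma PIA_of_total :
  (forall x y : A, (forall h, h * x = 0 -> h * y = 0) \/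
                   (forall h, h * y = 0 -> h * x = 0)) ->
  principal_ideal_algebra A.
Proof.
move=> Htot I II.
have [g [Ig gmin]] : exists g, I g /\
    forall g', I g' -> (\dim (lker (amulr g)) <= \dim (lker (amulr g')))%N.
  apply: NNPP => H.
  have step : forall g, I g -> exists g', I g' /\
      (\dim (lker (amulr g')) < \dim (lker (amulr g)))%N.
    move=> g Ig; apply: NNPP => H2; apply: H; exists g; split=> // g' Ig'.
    rewrite leqNgt; apply/negP => lt; apply: H2; exists g'; split=> //.
  have [n] := ubnP (\dim (lker (amulr (0 : A)))).
  elim: n (0 : A) (ideal0 II) => // n IH g0 Ig0 lt.
  have [g' [Ig' lt']] := step g0 Ig0.
  exact: (IH g' Ig' (leq_trans lt' lt)).
exists g => x; split; last by move=> [a ->]; apply: idealM.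
move=> Ix; apply: DA => h hg.
case: (Htot x g) => H; last by rewrite Acomm H.
have sub : (lker (amulr x) <= lker (amulr g))%VS.
  by apply/subvP => u; rewrite !memv_ker !amulrE => /eqP /H ->.
have eq : lker (amulr x) = lker (amulr g).
  by apply/eqP; rewrite eqEdim sub gmin.
have : h \in lker (amulr x) by rewrite eq memv_ker amulrE hg.
by rewrite memv_ker amulrE Acomm => /eqP.
Qed.

End Gor.

Lemma Btrick (K : fieldType) (B : falgType K) (Bc : commutative_alg B)
  (PB : principal_ideal_algebra B) (X Y P Q S : B) :
  P * X = 0 -> P * Y = S -> Q * Y = 0 -> Q * X = S -> S = 0.
Proof.
move=> PX PY QY QX.
have sw : forall a b c : B, a * (b * c) = b * (a * c).
  by move=> a b c; rewrite !mulrA (Bc a b).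
pose I z := exists u w, z = u * X + w * Y.
have II : is_ideal I.
  split.
  - by exists 0, 0; rewrite !mul0r addr0.
  - move=> a b [u1 [w1 ->]] [u2 [w2 ->]]; exists (u1 + u2), (w1 + w2).
    by rewrite !mulrDl addrACA.
  - by move=> a z [u [w ->]]; exists (a * u), (a * w); rewrite mulrDr !mulrA.
have [G HG] := PB I II.
have [u [w Gd]] : I G by apply/HG; exists 1; rewrite mul1r.
have [p Xp] : exists p, X = p * G by apply/HG; exists 1, 0; rewrite mul1r mul0r addr0.
have [q Yq] : exists q, Y = q * G by apply/HG; exists 0, 1; rewrite mul1r mul0r add0r.
have e1 : S = q * (w * S).
  rewrite -{1}PY Yq Gd !mulrDr (sw P q) (sw P u) PX mulr0 mulr0 add0r.
  by rewrite (sw P q) (sw P w) PY.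
have e2 : S = u * (p * S).
  rewrite -{1}QX Xp Gd !mulrDr (sw Q p) (sw Q u) QX (sw Q p) (sw Q w) QY.
  by rewrite !mulr0 addr0 sw.
have e3 : G = u * (p * G) + w * (q * G) by rewrite -Xp -Yq.
have e4 : S = P * (q * G) by rewrite -Yq.
have : S = S + S.
  rewrite {1}e4 e3 !mulrDr (sw q u) (sw P u) (sw q p) (sw P p) -e4.
  rewrite (sw q w) (sw P w) (sw P q) -e4.
  by rewrite -e2 (sw w q) -e1.
by move=> h; apply: (addrI S); rewrite addr0 -h.
Qed.

Unset Implicit Arguments.
Theorem theorem3p1 (K : fieldType) (charK0 : [pchar K] =i pred0)
  (A : falgType K) (Acomm : commutative_alg A) (M : A -> Prop)
  (Aloc : local_with M) (Agor : gorenstein M)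
  (notPIA : ~ principal_ideal_algebra A) :
  (forall (B : falgType K), commutative_alg B -> principal_ideal_algebra B ->
     forall (f : {lrmorphism A -> B}) (x : A), socle M x -> f x = 0)
  /\
  (forall (B : falgType K), commutative_alg B -> principal_ideal_algebra B ->
     forall (f : {lrmorphism A -> B}), ~ injective f).
Proof.
have [S [HS dS]] := Agor.
set s := vpick S.
have snz : s != 0.
  by rewrite vpick0; apply/negP => /eqP S0; move: dS; rewrite S0 dimv0.
have Sl : S = <[s]>%VS.
  by apply/eqP; rewrite eq_sym eqEdim -memvE memv_pick dS dim_vline snz.
have socs : forall x, socle M x <-> exists k, x = k *: s.
  move=> x; rewrite -HS Sl; split; by move/vlineP.
have [x [y [[a [ax ay]] [b [b_y bx]]]]] : exists x y : A,
    (exists a, a * x = 0 /\ a * y != 0) /\ (exists b, b * y = 0 /\ b * x != 0).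
  apply: NNPP => H; apply: notPIA.
  suff tot : forall x y : A, (forall h, h * x = 0 -> h * y = 0) \/
      (forall h, h * y = 0 -> h * x = 0).
    exact: (PIA_of_total Acomm Aloc snz socs tot).
  move=> x y.
  apply: NNPP => H2; apply: H; exists x, y; split.
  - apply: NNPP => H3; apply: H2; left => h hx; apply: NNPP => /eqP hy.
    by apply: H3; exists h; split.
  - apply: NNPP => H3; apply: H2; right => h hx; apply: NNPP => /eqP hy.
    by apply: H3; exists h; split.
have [a' ha'] := G1 Acomm Aloc socs ay.
have [b' hb'] := G1 Acomm Aloc socs bx.
have fs0 : forall B : falgType K, commutative_alg B -> principal_ideal_algebra B ->
    forall f : {lrmorphism A -> B}, f s = 0.
  move=> B Bc PB f.
  apply: (Btrick Bc PB (X := f x) (Y := f y) (P := f (a' * a)) (Q := f (b' * b))).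
  - by rewrite -rmorphM -mulrA ax mulr0 rmorph0.
  - by rewrite -rmorphM -mulrA ha'.
  - by rewrite -rmorphM -mulrA b_y mulr0 rmorph0.
  - by rewrite -rmorphM -mulrA hb'.
split.
- by move=> B Bc PB f z /socs [k ->]; rewrite linearZ /= -(scaler0 _ k); congr (_ *: _); exact: fs0.
- move=> B Bc PB f finj; move/negP: snz; apply; apply/eqP; apply: finj.
  by rewrite (fs0 B Bc PB f) rmorph0.
Qed.
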